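(* Let $n\ge2$, let $\lambda_1,\dots,\lambda_n\in\mathbb{C}^*$ (not necessarily distinct), and let $1\le s\le n$ be such that $\lambda=(\lambda_1,\dots,\lambda_n)$ has only level $s$ resonances. Suppose there exists a strictly increasing sequence of integers $(p_\nu)_{\nu\ge0}$ with $p_0=1$ such that $\sum_{\nu\ge0}p_\nu^{-1}\log\omega_s(p_{\nu+1})^{-1}<\infty$ (i.e. $\lambda$ satisfies the partial Brjuno condition of order $s$), and that there exist $k\in\mathbb{N}$ and $\alpha\ge1$ such that $p_\nu>k$ implies $\tilde\omega(p_\nu-k)\ge\omega_s(p_\nu)^\alpha$. Then $\lambda$ satisfies the reduced Brjuno condition.
   Context: For $k\in\mathbb{N}^n$, $|k|=k_1+\cdots+k_n$ and $\lambda^k=\lambda_1^{k_1}\cdots\lambda_n^{k_n}$. For $m\ge2$: $\omega_s(m)=\min_{2\le|k|\le m}\min_{1\le j\le n}|\underline\lambda^k-\lambda_j|$, where $k$ ranges over $\mathbb{N}^s$ and $\underline\lambda^k=\lambda_1^{k_1}\cdots\lambda_s^{k_s}$; and $\tilde\omega(m)=\min_{1\le j\le n}\min\{|\lambda^k-\lambda_j| : k\in\mathbb{N}^n,\ 2\le|k|\le m,\ \lambda^k\ne\lambda_j\}$. The reduced Brjuno condition: there is a strictly increasing sequence of integers $(q_\nu)_{\nu\ge0}$ with $q_0=1$ and $\sum_{\nu\ge0}q_\nu^{-1}\log\tilde\omega(q_{\nu+1})^{-1}<\infty$. Only level $s$ resonances: writing $\lambda=(\lambda_1,\dots,\lambda_s,\mu_1,\dots,\mu_r)$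 with $r=n-s$, for every $k\in\mathbb{N}^n$ with $|k|\ge 2$: there is $h\in\{1,\dots,s\}$ with $\lambda^k=\lambda_h$ iff $k\in\tilde K_1$, and there is $j\in\{1,\dots,r\}$ with $\lambda^k=\mu_j$ iff $k\in\tilde K_2$, where $\tilde K_1=\{k: |k|\ge2,\ k_1+\cdots+k_s=1,\ \mu_1^{k_{s+1}}\cdots\mu_r^{k_n}=1\}$ and $\tilde K_2=\{k: |k|\ge 2,\ k_1=\cdots=k_s=0,\ \exists j\text{ with }\mu_1^{k_{s+1}}\cdots\mu_r^{k_n}=\mu_j\}$. *)

(* Defs.v *)
From Stdlib Require Import Reals.
From Coquelicot Require Import Coquelicot.
Open Scope R_scope.

(* A tuple lambda = (lambda_1,...,lambda_n) of complex numbers is encoded as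
   lam : nat -> C with lambda_{i+1} = lam i (only i < n matters).
   A multi-index k in N^n is encoded as k : nat -> nat with k_{i+1} = k i. *)

Fixpoint cpow (z : C) (e : nat) : C :=
  match e with O => RtoC 1 | S e' => Cmult z (cpow z e') end.

Fixpoint cmonom (lam : nat -> C) (k : nat -> nat) (a len : nat) : C :=
  match len with
  | O => RtoC 1
  | S l => Cmult (cpow (lam a) (k a)) (cmonom lam k (S a) l)
  end.

Fixpoint ksum (k : nat -> nat) (a len : nat) : nat :=
  match len with O => O | S l => (k a + ksum k (S a) l)%nat end.

Definition omega_s (lam : nat -> C) (n s m : nat) : Rbar :=
  Glb_Rbar (fun x => exists k : nat -> nat, exists j : nat,
     (2 <= ksum k 0 s <= m)%nat /\ (j < n)%nat /\
     x = Cmod (Cminus (cmonom lam k 0 s) (lam j))).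

(* tilde omega(m) = min_j min { |lambda^k - lambda_j| : k in N^n, 2<=|k|<=m,
   lambda^k <> lambda_j } (infimum in Rbar; +oo for an empty set). *)
Definition omega_t (lam : nat -> C) (n m : nat) : Rbar :=
  Glb_Rbar (fun x => exists k : nat -> nat, exists j : nat,
     (2 <= ksum k 0 n <= m)%nat /\ (j < n)%nat /\
     cmonom lam k 0 n <> lam j /\
     x = Cmod (Cminus (cmonom lam k 0 n) (lam j))).

Definition brjuno_along (w : nat -> Rbar) (p : nat -> nat) : Prop :=
  p 0%nat = 1%nat /\ (forall nu, (p nu < p (S nu))%nat) /\
  (forall nu, Rbar_lt (Finite 0) (w (p (S nu))) /\ is_finite (w (p (S nu)))) /\
  ex_series (fun nu => / INR (p nu) * ln (/ real (w (p (S nu))))).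

(* Only level s resonances, with r = n - s, mu_j = lambda_{s+j}. *)
Definition only_level_s_resonances (lam : nat -> C) (n s : nat) : Prop :=
  forall k : nat -> nat, (2 <= ksum k 0 n)%nat ->
    ((exists h, (h < s)%nat /\ cmonom lam k 0 n = lam h) <->
       (ksum k 0 s = 1%nat /\ cmonom lam k s (n - s) = RtoC 1)) /\
    ((exists j, (j < n - s)%nat /\ cmonom lam k 0 n = lam (s + j)%nat) <->
       ((forall i, (i < s)%nat -> k i = 0%nat) /\
        exists j, (j < n - s)%nat /\ cmonom lam k s (n - s) = lam (s + j)%nat)).

Definition partial_brjuno (lam : nat -> C) (n s : nat) : Prop :=
  exists p : nat -> nat, brjuno_along (omega_s lam n s) p.

Definition reduced_brjuno (lam : nat -> C) (n : nat) : Prop :=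
  exists q : nat -> nat, brjuno_along (omega_t lam n) q.

(* Main.v *)
Require Import Defs.
From Stdlib Require Import Reals.
From Coquelicot Require Import Coquelicot.
From Stdlib Require Import Lia Lra Classical.
Open Scope R_scope.

Lemma cmonom_zero (lam : nat -> C) (k : nat -> nat) : forall len a,
  (forall i, (a <= i)%nat -> k i = 0%nat) -> cmonom lam k a len = RtoC 1.
Proof.
  induction len as [|len IH]; intros a Hk; simpl; [reflexivity|].
  rewrite Hk by lia. rewrite IH by (intros; apply Hk; lia). simpl.
  apply Cmult_1_l.
Qed.

Lemma ksum_zero (k : nat -> nat) : forall len a,
  (forall i, (a <= i)%nat -> k i = 0%nat) -> ksum k a len = 0%nat.
Proof.
  induction len as [|len IH]; intros a Hk; simpl; [reflexivity|].
  rewrite Hk by lia. rewrite IH by (intros; apply Hk; lia). reflexivity.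
Qed.

Definition k2 (i : nat) : nat := if Nat.eqb i 0 then 2%nat else 0%nat.

Lemma ksum_k2 : forall m, (1 <= m)%nat -> ksum k2 0 m = 2%nat.
Proof.
  intros [|m] H; [lia|]. simpl. rewrite ksum_zero; [reflexivity|].
  intros i Hi. unfold k2. destruct (Nat.eqb_spec i 0); lia.
Qed.

Lemma omega_t_mono lam n m m' : (m <= m')%nat ->
  Rbar_le (omega_t lam n m') (omega_t lam n m).
Proof.
  intros H. unfold omega_t.
  destruct (Glb_Rbar_correct (fun x => exists k : nat -> nat, exists j : nat,
     (2 <= ksum k 0 n <= m)%nat /\ (j < n)%nat /\
     cmonom lam k 0 n <> lam j /\
     x = Cmod (Cminus (cmonom lam k 0 n) (lam j)))) as [_ G].
  apply G. intros x (k & j & H1 & H2 & H3 & H4).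
  destruct (Glb_Rbar_correct (fun x => exists k : nat -> nat, exists j : nat,
     (2 <= ksum k 0 n <= m')%nat /\ (j < n)%nat /\
     cmonom lam k 0 n <> lam j /\
     x = Cmod (Cminus (cmonom lam k 0 n) (lam j)))) as [L _].
  apply L. exists k, j. repeat split; auto; lia.
Qed.

Lemma omega_t_ub lam n s : (2 <= n)%nat -> (1 <= s <= n)%nat ->
  only_level_s_resonances lam n s ->
  exists x0, forall m, (2 <= m)%nat -> Rbar_le (omega_t lam n m) (Finite x0).
Proof.
  intros Hn Hs Hres.
  assert (Hne : cmonom lam k2 0 n <> lam 0%nat).
  { intros E. destruct (Hres k2) as [[F _] _].
    - rewrite ksum_k2; lia.
    - destruct F as [F _]. exists 0%nat. split; [lia|exact E].
      rewrite ksum_k2 in F; lia. }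
  exists (Cmod (Cminus (cmonom lam k2 0 n) (lam 0%nat))).
  intros m Hm. unfold omega_t.
  destruct (Glb_Rbar_correct (fun x => exists k : nat -> nat, exists j : nat,
     (2 <= ksum k 0 n <= m)%nat /\ (j < n)%nat /\
     cmonom lam k 0 n <> lam j /\
     x = Cmod (Cminus (cmonom lam k 0 n) (lam j)))) as [L _].
  apply L. exists k2, 0%nat. rewrite ksum_k2 by lia. repeat split; auto; lia.
Qed.

Lemma p_ge (p : nat -> nat) : p 0%nat = 1%nat -> (forall nu, (p nu < p (S nu))%nat) ->
  forall nu, (nu + 1 <= p nu)%nat.
Proof.
  intros H0 HS. induction nu; [lia|]. specialize (HS nu). lia.
Qed.

Theorem lemma2p2 (n s : nat) (lam : nat -> C) :
  (2 <= n)%nat ->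
  (forall i, (i < n)%nat -> lam i <> RtoC 0) ->
  (1 <= s <= n)%nat ->
  only_level_s_resonances lam n s ->
  (exists p : nat -> nat,
     brjuno_along (omega_s lam n s) p /\
     exists (k : nat) (alpha : R), 1 <= alpha /\
       forall nu, (k < p nu)%nat ->
         Rbar_le (Finite (Rpower (real (omega_s lam n s (p nu))) alpha))
                 (omega_t lam n (p nu - k)%nat)) ->
  reduced_brjuno lam n.
Proof.
  intros Hn Hnz Hs Hres (p & (Hp0 & Hpinc & Hpos & Hser) & k & alpha & Halpha & Hcmp).
  destruct (omega_t_ub lam n s Hn Hs Hres) as [x0 Hx0].
  set (W := omega_t lam n).
  destruct (classic (exists m0, (2 <= m0)%nat /\ Rbar_lt (W m0) (Finite 1))) as [[m0 [Hm0 Hlt]]|HA].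
  -
    set (N := (m0 + 2 * k)%nat).
    set (q := fun nu => match nu with 0%nat => 1%nat | S m => (p (S m + N)%nat - k)%nat end).
    pose proof (p_ge p Hp0 Hpinc) as pge.
    assert (Key : forall nu, exists w o, W (p (S nu + N)%nat - k)%nat = Finite w /\
       omega_s lam n s (p (S nu + N)%nat) = Finite o /\ 0 < o /\
       0 < Rpower o alpha /\ Rpower o alpha <= w /\ w < 1).
    { intros nu.
      destruct (Hpos (nu + N)%nat) as [Hp1 Hp2].
      change (S nu + N)%nat with (S (nu + N)).
      destruct (omega_s lam n s (p (S (nu + N)%nat))) as [o| |] eqn:Eo;
        unfold is_finite in Hp2; simpl in Hp1, Hp2; try discriminate; try contradiction.
      pose proof (Hcmp (S (nu + N)%nat)) as Hc. rewrite Eo in Hc. simpl real in Hc.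
      specialize (pge (S (nu + N))).
      assert (Hc' : Rbar_le (Finite (Rpower o alpha)) (W (p (S (nu + N)%nat) - k)%nat))
        by (apply Hc; unfold N in *; lia).
      assert (Hm : Rbar_le (W (p (S (nu + N)%nat) - k)%nat) (W m0))
        by (apply omega_t_mono; unfold N in *; lia).
      assert (Hpw : 0 < Rpower o alpha) by (unfold Rpower; apply exp_pos).
      destruct (W (p (S (nu + N)%nat) - k)%nat) as [w| |]; simpl in Hc', Hm; try contradiction.
      - exists w, o. repeat split; auto.
        destruct (W m0); simpl in Hlt, Hm; try contradiction; lra.
      - destruct (W m0); simpl in Hlt, Hm; contradiction. }
    exists q. split; [reflexivity|]. split.
    { intros [|nu]; simpl.
      - pose proof (pge (S N)). unfold N in *. lia.
      - pose proof (Hpinc (S (nu + N))). pose proof (pge (S (nu + N))). unfold N in *. lia. }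
    split.
    { intros nu. destruct (Key nu) as (w & o & Ew & _ & _ & H1 & H2 & _).
      change (q (S nu)) with (p (S nu + N)%nat - k)%nat. fold W. rewrite Ew. simpl.
      split; [lra|reflexivity]. }
    apply ex_series_incr_1.
    apply (@ex_series_le R_AbsRing R_CompleteNormedModule _
      (fun nu => scal (2 * alpha) (/ INR (p (S N + nu)%nat) * ln (/ real (omega_s lam n s (p (S (S N + nu)%nat))))))).
    2: { apply (@ex_series_scal R_AbsRing R_NormedModule).
         apply (ex_series_incr_n (fun nu => / INR (p nu) * ln (/ real (omega_s lam n s (p (S nu))))) (S N)).
         exact Hser. }
    intros nu. destruct (Key (S nu)) as (w & o & Ew & Eo & Ho & H1 & H2 & H3).
    change (q (S (S nu))) with (p (S (S nu) + N)%nat - k)%nat.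
    change (q (S nu)) with (p (S nu + N)%nat - k)%nat. fold W. rewrite Ew.
    replace (S (S N + nu)) with (S (S nu) + N)%nat by lia.
    replace (S N + nu)%nat with (S nu + N)%nat by lia.
    rewrite Eo. simpl real.
    pose proof (pge (S nu + N)%nat) as HP.
    rewrite minus_INR by (unfold N in *; lia).
    assert (HkP : 2 * INR k <= INR (p (S nu + N)%nat)).
    { replace 2 with (INR 2) by (simpl; lra). rewrite <- mult_INR. apply le_INR. unfold N in *; lia. }
    assert (HP0 : 1 <= INR (p (S nu + N)%nat)).
    { replace 1 with (INR 1) by reflexivity. apply le_INR. lia. }
    set (P := INR (p (S nu + N)%nat)) in *.
    assert (Hk0 : 0 <= INR k) by apply pos_INR.
    assert (Hlw : 0 <= ln (/ w)).
    { rewrite ln_Rinv by lra. assert (ln w < 0); [|lra].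
      rewrite <- ln_1. apply ln_increasing; lra. }
    assert (Hlo : ln (/ w) <= alpha * ln (/ o)).
    { rewrite !ln_Rinv by lra.
      assert (ln (Rpower o alpha) <= ln w) by (apply ln_le; lra).
      unfold Rpower in H. rewrite ln_exp in H. lra. }
    unfold scal; simpl; unfold mult; simpl.
    change (norm ?x) with (Rabs x).
    assert (HQ : 0 < P - INR k) by lra.
    rewrite Rabs_pos_eq by (apply Rmult_le_pos; [apply Rlt_le, Rinv_0_lt_compat|]; lra).
    assert (HiQ : / (P - INR k) <= 2 * / P).
    { apply (Rmult_le_reg_l (P - INR k)); [lra|].
      rewrite Rinv_r by lra.
      apply (Rmult_le_reg_l P); [lra|].
      replace (P * ((P - INR k) * (2 * / P))) with (2 * (P - INR k)) by (field; lra).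
      lra. }
    assert (0 < / P) by (apply Rinv_0_lt_compat; lra).
    assert (0 < / (P - INR k)) by (apply Rinv_0_lt_compat; lra).
    replace (2 * alpha * (/ P * ln (/ o))) with ((2 * / P) * (alpha * ln (/ o))) by ring.
    apply Rmult_le_compat; lra.
  -
    assert (HA' : forall m, (2 <= m)%nat -> exists w, W m = Finite w /\ 1 <= w <= x0).
    { intros m Hm. specialize (Hx0 m Hm).
      assert (Rbar_le (Finite 1) (W m)).
      { destruct (Rbar_le_lt_dec (Finite 1) (W m)) as [?|Hl]; auto.
        exfalso; apply HA; exists m; split; auto. }
      unfold W in *. destruct (omega_t lam n m) as [w| |]; simpl in *; try contradiction.
      exists w; split; auto. }
    exists (fun nu => (2 ^ nu)%nat). split; [reflexivity|]. split.
    { intros nu. simpl. assert (0 < 2 ^ nu)%nat by (apply Nat.neq_0_lt_0, Nat.pow_nonzero; lia). lia. }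
    assert (H2 : forall nu, (2 <= 2 ^ S nu)%nat).
    { intros nu. simpl. assert (0 < 2 ^ nu)%nat by (apply Nat.neq_0_lt_0, Nat.pow_nonzero; lia). lia. }
    split.
    { intros nu. destruct (HA' _ (H2 nu)) as [w [E Hw]]. fold W. rewrite E. simpl. split; [lra|reflexivity]. }
    apply (@ex_series_le R_AbsRing R_CompleteNormedModule _ (fun nu => scal (ln x0) ((/2) ^ nu))).
    2: { apply (@ex_series_scal R_AbsRing R_NormedModule), ex_series_geom. rewrite Rabs_pos_eq; lra. }
    intros nu. destruct (HA' _ (H2 nu)) as [w [E Hw]]. fold W. rewrite E. simpl.
    rewrite pow_INR. simpl INR. rewrite <- Rinv_pow by lra.
    unfold scal; simpl; unfold mult; simpl.
    assert (0 < 2 ^ nu) by (apply pow_lt; lra).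
    rewrite ln_Rinv by lra.
    assert (0 <= ln w) by (rewrite <- ln_1; apply ln_le; lra).
    assert (ln w <= ln x0) by (apply ln_le; lra).
    change (norm ?x) with (Rabs x).
    rewrite Rabs_mult, Rabs_Ropp, (Rabs_pos_eq (ln w)) by lra.
    replace (1+1) with 2 by ring.
    rewrite Rabs_pos_eq by (apply Rlt_le, Rinv_0_lt_compat; lra).
    rewrite Rmult_comm. apply Rmult_le_compat_r; [apply Rlt_le, Rinv_0_lt_compat; lra|lra].
Qed.
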